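(* Let $G$ be a $g$-barrelled convergence group and $H$ a locally compact convergence group. Then every compact subset of $\Gamma_s(G,\Gamma_c H)$ is equicontinuous, i.e. equicontinuous as a subset of $\Gamma(G,\Gamma_c H)$.
   Context: All groups are abelian. A convergence structure on a set $X$ assigns to each $x$ a collection of filters converging to $x$. This assignment must satisfy three conditions: point ultrafilters converge to their point; finite intersections of filters converging to $x$ converge to $x$; and finer filters of convergent filters converge. A map is continuous if it sends filters converging to $x$ to filters converging to the image of $x$. A convergence group is an abelian group with a convergence structure such that $\mathcal F\to x$, $\mathcal G\to y$ imply $\mathcal F-\mathcal G\to x-y$. A convergence space is Hausdorff if every filter has at most one limit. A subset $K$ is compact if every ultrafilter containing $K$ converges to a point of $K$. A convergence space is locally compact if it is Hausdorff and each convergent filter contains a compact set. $\mathbb T=\mathbb R/\mathbb Z$. For convergence groups $G,L$, $\Gamma(G,L)$ is the group of continuous homomorphisms $G\to L$. $\Gamma_s(G,L)$ is $\Gamma(G,L)$ with the initial topology (or convergence structure) of pointwise convergence. $\Gamma_c(G,L)$ is $\Gamma(G,L)$ with the continuous convergence structure: $\Phi\to\varphi$ iff for every $\mathcal F\to x$ in $G$, the filter generated by $\{\{\psi(y):\psi\in A,y\in F\}:A\in\Phi,F\in\mathcal F\}$ converges to $\varphi(x)$ in $L$. Write $\Gamma_c H=\Gamma_c(H,\mathbb T)$ and $\Gamma_s G=\Gamma_s(G,\mathbb T)$. A set $M\subseteq\Gamma(G,L)$ is equicontinuous if for every filter $\mathcal F\to0$ in $G$, the filter $M(\mathcal F)$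 generated by the sets $\{\varphi(x):\varphi\in M,x\in F\}$, $F\in\mathcal F$, converges to $0$ in $L$. A convergence group $G$ is $g$-barrelled if every compact subset of $\Gamma_s G$ is equicontinuous. *)

(* Defs.v *)
From Stdlib Require Import Reals Lra ClassicalEpsilon Classical ProofIrrelevance.
Open Scope R_scope.

Definition set (X : Type) := X -> Prop.
Definition filt (X : Type) := set X -> Prop.

Definition is_filter {X : Type} (F : filt X) : Prop :=
  F (fun _ => True) /\ ~ F (fun _ => False) /\
  (forall A B : set X, F A -> (forall x, A x -> B x) -> F B) /\
  (forall A B : set X, F A -> F B -> F (fun x => A x /\ B x)).

Definition is_ultrafilter {X : Type} (U : filt X) : Prop :=
  is_filter U /\ forall A : set X, U A \/ U (fun x => ~ A x).

Definition pt_filter {X : Type} (x : X) : filt X := fun A => A x.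

Definition filt_le {X : Type} (F G : filt X) : Prop := forall A, F A -> G A.

Definition filt_inter {X : Type} (F G : filt X) : filt X := fun A => F A /\ G A.

Definition fmap {X Y : Type} (f : X -> Y) (F : filt X) : filt Y :=
  fun B => F (fun x => B (f x)).

Definition is_convergence {X : Type} (conv : filt X -> X -> Prop) : Prop :=
  (forall x, conv (pt_filter x) x) /\
  (forall F G x, is_filter F -> is_filter G -> conv F x -> conv G x ->
     conv (filt_inter F G) x) /\
  (forall F G x, is_filter F -> is_filter G -> filt_le F G -> conv F x -> conv G x).

Definition continuous_map {X Y : Type} (cX : filt X -> X -> Prop)
  (cY : filt Y -> Y -> Prop) (f : X -> Y) : Prop :=
  forall F x, is_filter F -> cX F x -> cY (fmap f F) (f x).

Definition hausdorff {X : Type} (conv : filt X -> X -> Prop) : Prop :=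
  forall F x y, is_filter F -> conv F x -> conv F y -> x = y.

Definition compact {X : Type} (conv : filt X -> X -> Prop) (K : set X) : Prop :=
  forall U, is_ultrafilter U -> U K -> exists x, K x /\ conv U x.

Definition locally_compact {X : Type} (conv : filt X -> X -> Prop) : Prop :=
  hausdorff conv /\
  forall F x, is_filter F -> conv F x -> exists K, F K /\ compact conv K.

Record cgdata := CGData {
  car :> Type;
  cadd : car -> car -> car;
  copp : car -> car;
  czero : car;
  cconv : filt car -> car -> Prop }.

Definition filt_sub (G : cgdata) (F1 F2 : filt G) : filt G :=
  fun C => exists A B, F1 A /\ F2 B /\
     forall a b, A a -> B b -> C (cadd G a (copp G b)).

Definition is_cgroup (G : cgdata) : Prop :=
  (forall x y z : G, cadd G x (cadd G y z) = cadd G (cadd G x y) z) /\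
  (forall x y : G, cadd G x y = cadd G y x) /\
  (forall x : G, cadd G x (czero G) = x) /\
  (forall x : G, cadd G x (copp G x) = czero G) /\
  is_convergence (cconv G) /\
  (forall F1 F2 x y, is_filter F1 -> is_filter F2 ->
     cconv G F1 x -> cconv G F2 y ->
     cconv G (filt_sub G F1 F2) (cadd G x (copp G y))).

Definition is_hom (G L : cgdata) (f : G -> L) : Prop :=
  forall x y, f (cadd G x y) = cadd L (f x) (f y).

Definition cont_hom (G L : cgdata) (f : G -> L) : Prop :=
  is_hom G L f /\ continuous_map (cconv G) (cconv L) f.

Definition Gam (G L : cgdata) : Type := {f : G -> L | cont_hom G L f}.

Definition GammaS_conv (G L : cgdata) : filt (Gam G L) -> Gam G L -> Prop :=
  fun Phi phi => forall x : G,
    cconv L (fmap (fun psi : Gam G L => proj1_sig psi x) Phi) (proj1_sig phi x).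

Definition eval_filter {G L : cgdata} (Phi : filt (Gam G L)) (F : filt G) : filt L :=
  fun C => exists A F', Phi A /\ F F' /\
     forall (psi : Gam G L) (y : G), A psi -> F' y -> C (proj1_sig psi y).

Definition GammaC_conv (G L : cgdata) : filt (Gam G L) -> Gam G L -> Prop :=
  fun Phi phi => forall (F : filt G) (x : G), is_filter F -> cconv G F x ->
    cconv L (eval_filter Phi F) (proj1_sig phi x).

Definition set_image_filter {G L : cgdata} (M : set (Gam G L)) (F : filt G) : filt L :=
  fun C => exists F', F F' /\
     forall (psi : Gam G L) (y : G), M psi -> F' y -> C (proj1_sig psi y).

Definition equicontinuous (G L : cgdata) (M : set (Gam G L)) : Prop :=
  forall F : filt G, is_filter F -> cconv G F (czero G) ->
    cconv L (set_image_filter M F) (czero L).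

(** * The circle group T = R/Z, represented by [0,1) *)
Definition Tcar : Type := {x : R | 0 <= x < 1}.

Lemma frac_in (r : R) : 0 <= frac_part r < 1.
Proof. destruct (base_fp r). lra. Qed.

Definition Tmk (r : R) : Tcar := exist _ (frac_part r) (frac_in r).
Definition Tadd (a b : Tcar) : Tcar := Tmk (proj1_sig a + proj1_sig b).
Definition Topp (a : Tcar) : Tcar := Tmk (- proj1_sig a).

Lemma zero_in : 0 <= 0 < 1.
Proof. lra. Qed.
Definition Tzero : Tcar := exist _ 0 zero_in.

Definition dT (s t : Tcar) : R :=
  let u := frac_part (proj1_sig s - proj1_sig t) in Rmin u (1 - u).

(* quotient topology of R/Z, as a convergence: the filter contains all balls *)
Definition Tconv (F : filt Tcar) (t : Tcar) : Prop :=
  forall eps, 0 < eps -> F (fun s => dT s t < eps).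

Definition TT : cgdata := CGData Tcar Tadd Topp Tzero Tconv.

(* For the pointwise operations on Gamma(H,T)
   the first branch is always taken (Gamma(H,T) is closed under pointwise
   operations since T is a convergence group); this is only a device to avoid
   putting that closure proof into the definitions. *)
Definition glift {X : Type} {P : X -> Prop} (f : X) (d : sig P) : sig P :=
  match excluded_middle_informative (P f) with
  | left p => exist P f p
  | right _ => d
  end.

Definition Gadd (H : cgdata) (phi psi : Gam H TT) : Gam H TT :=
  glift (fun h => Tadd (proj1_sig phi h) (proj1_sig psi h)) phi.
Definition Gopp (H : cgdata) (phi : Gam H TT) : Gam H TT :=
  glift (fun h => Topp (proj1_sig phi h)) phi.

Lemma Tzero_hom : Tzero = Tadd Tzero Tzero.
Proof.
  unfold Tadd, Tmk, Tzero; simpl.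
  assert (E : frac_part (0 + 0) = 0) by (rewrite Rplus_0_l; apply fp_R0).
  generalize zero_in. generalize (frac_in (0 + 0)). rewrite E. intros p q.
  f_equal. apply proof_irrelevance.
Qed.

Lemma zero_cont_hom (H : cgdata) : cont_hom H TT (fun _ => Tzero).
Proof.
  split.
  - intros x y. exact Tzero_hom.
  - intros F x HF _ eps Heps. unfold fmap. simpl.
    destruct HF as [HT [_ [Hup _]]].
    apply (Hup (fun _ => True)); [exact HT|].
    intros _ _. unfold dT; simpl. rewrite Rminus_diag, fp_R0.
    unfold Rmin; destruct (Rle_dec 0 (1 - 0)); lra.
Qed.

Definition Gzero (H : cgdata) : Gam H TT := exist _ (fun _ => Tzero) (zero_cont_hom H).

Definition GammaCH (H : cgdata) : cgdata :=
  CGData (Gam H TT) (Gadd H) (Gopp H) (Gzero H) (GammaC_conv H TT).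

Definition g_barrelled (G : cgdata) : Prop :=
  forall K : set (Gam G TT), compact (GammaS_conv G TT) K -> equicontinuous G TT K.

(* Main.v *)
From Stdlib Require Import Reals Lra Lia ClassicalEpsilon Classical ProofIrrelevance.
Require Import Defs.
Open Scope R_scope.

Lemma fp_shift (r : R) (z : Z) : frac_part (r + IZR z) = frac_part r.
Proof.
  assert (E : Int_part (r + IZR z) = (Int_part r + z)%Z).
  { symmetry. apply Int_part_spec. rewrite plus_IZR.
    destruct (base_Int_part r). lra. }
  unfold frac_part. rewrite E, plus_IZR. lra.
Qed.

Lemma fp_eq (r : R) : exists z, frac_part r = r + IZR z.
Proof. exists (- Int_part r)%Z. unfold frac_part. rewrite opp_IZR. lra. Qed.

Lemma fp_ext (r s : R) (z : Z) : r = s + IZR z -> frac_part r = frac_part s.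
Proof. intros ->. apply fp_shift. Qed.

Lemma Tmk_eq (r s : R) : frac_part r = frac_part s -> Tmk r = Tmk s.
Proof.
  unfold Tmk. intro E. generalize (frac_in r) (frac_in s). rewrite E.
  intros p q. f_equal. apply proof_irrelevance.
Qed.

Lemma Tadd_swap (a b c d : Tcar) :
  Tadd (Tadd a b) (Tadd c d) = Tadd (Tadd a c) (Tadd b d).
Proof.
  unfold Tadd. simpl. apply Tmk_eq.
  destruct (fp_eq (proj1_sig a + proj1_sig b)) as [z1 E1].
  destruct (fp_eq (proj1_sig c + proj1_sig d)) as [z2 E2].
  destruct (fp_eq (proj1_sig a + proj1_sig c)) as [z3 E3].
  destruct (fp_eq (proj1_sig b + proj1_sig d)) as [z4 E4].
  rewrite E1, E2, E3, E4.
  apply (fp_ext _ _ (z1 + z2 - z3 - z4)%Z).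
  rewrite !minus_IZR, !plus_IZR. lra.
Qed.

Definition Dd (r : R) : R := Rmin (frac_part r) (1 - frac_part r).

Lemma Dd_le (r : R) (n : Z) : Dd r <= Rabs (r - IZR n).
Proof.
  unfold Dd. pose proof (base_fp r) as Hb.
  pose proof (Rplus_Int_part_frac_part r) as Hr.
  set (m := Int_part r) in *. set (u := frac_part r) in *.
  destruct (Z.le_gt_cases n m) as [H|H].
  - apply IZR_le in H. apply Rle_trans with u; [apply Rmin_l|].
    rewrite Rabs_right; lra.
  - assert (H' : (m + 1 <= n)%Z) by lia. apply IZR_le in H'. rewrite plus_IZR in H'.
    apply Rle_trans with (1 - u); [apply Rmin_r|].
    rewrite Rabs_left1; lra.
Qed.

Lemma Dd_att (r : R) : exists n, Dd r = Rabs (r - IZR n).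
Proof.
  unfold Dd. pose proof (base_fp r) as Hb.
  pose proof (Rplus_Int_part_frac_part r) as Hr.
  set (m := Int_part r) in *. set (u := frac_part r) in *.
  unfold Rmin. destruct (Rle_dec u (1 - u)).
  - exists m. rewrite Rabs_right; lra.
  - exists (m + 1)%Z. rewrite plus_IZR. rewrite Rabs_left1; lra.
Qed.

Lemma Dd_sub (r s : R) : Dd (r + s) <= Dd r + Dd s.
Proof.
  destruct (Dd_att r) as [n Hn]. destruct (Dd_att s) as [m Hm].
  rewrite Hn, Hm. eapply Rle_trans; [apply (Dd_le _ (n + m)%Z)|].
  rewrite plus_IZR. replace (r + s - (IZR n + IZR m)) with ((r - IZR n) + (s - IZR m)) by ring.
  apply Rabs_triang.
Qed.

Lemma Dd_shift (r : R) (z : Z) : Dd (r + IZR z) = Dd r.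
Proof. unfold Dd. rewrite fp_shift. reflexivity. Qed.

Lemma dT_Dd (s t : Tcar) : dT s t = Dd (proj1_sig s - proj1_sig t).
Proof. reflexivity. Qed.

Lemma dT_add (a b c d : Tcar) : dT (Tadd a b) (Tadd c d) <= dT a c + dT b d.
Proof.
  rewrite !dT_Dd. unfold Tadd, Tmk; simpl.
  destruct (fp_eq (proj1_sig a + proj1_sig b)) as [z1 E1].
  destruct (fp_eq (proj1_sig c + proj1_sig d)) as [z2 E2].
  rewrite E1, E2.
  replace (proj1_sig a + proj1_sig b + IZR z1 - (proj1_sig c + proj1_sig d + IZR z2))
    with ((proj1_sig a - proj1_sig c) + (proj1_sig b - proj1_sig d) + IZR (z1 - z2))
    by (rewrite minus_IZR; ring).
  rewrite Dd_shift. apply Dd_sub.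
Qed.

Lemma sum_cont_hom (H : cgdata) (phi psi : Gam H TT) :
  cont_hom H TT (fun h => Tadd (proj1_sig phi h) (proj1_sig psi h)).
Proof.
  destruct phi as [f [Hf Cf]], psi as [g [Hg Cg]]; simpl. split.
  - intros x y. simpl. rewrite Hf, Hg. apply Tadd_swap.
  - intros F x HF Hx eps Heps.
    pose proof (Cf F x HF Hx (eps/2) ltac:(lra)) as A1.
    pose proof (Cg F x HF Hx (eps/2) ltac:(lra)) as A2.
    unfold fmap in *. simpl in *.
    destruct HF as [_ [_ [Hup Hint]]].
    eapply Hup. apply (Hint _ _ A1 A2).
    simpl. intros y [B1 B2]. pose proof (dT_add (f y) (g y) (f x) (g x)). lra.
Qed.

Lemma Gadd_val (H : cgdata) (phi psi : Gam H TT) (h : H) :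
  proj1_sig (Gadd H phi psi) h = Tadd (proj1_sig phi h) (proj1_sig psi h).
Proof.
  unfold Gadd, glift.
  destruct (excluded_middle_informative _) as [p|n].
  - reflexivity.
  - exfalso. apply n. apply sum_cont_hom.
Qed.

Lemma pt_is_filter {X : Type} (x : X) : is_filter (pt_filter x).
Proof. unfold pt_filter; repeat split; auto. Qed.

Section Main.
Variables (G H : cgdata) (hH : is_cgroup H).

Definition evf (k : Gam G (GammaCH H)) (h : H) : G -> TT :=
  fun x => proj1_sig (proj1_sig k x) h.

Lemma ev_cont_hom k h : cont_hom G TT (evf k h).
Proof.
  destruct k as [k [Hk Ck]]. unfold evf; simpl. split.
  - intros x y. rewrite Hk. simpl. apply Gadd_val.
  - intros F x HF Hx eps Heps.
    pose proof (Ck F x HF Hx) as C1. simpl in C1. unfold GammaC_conv in C1.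
    destruct hH as [_ [_ [_ [_ [[Hpt _] _]]]]].
    destruct (C1 (pt_filter h) h (pt_is_filter h) (Hpt h) eps Heps)
      as [A [F' [HA [HF' Hall]]]].
    unfold fmap in *. destruct HF as [_ [_ [Hup _]]].
    eapply Hup; [exact HA|]. simpl. intros y Ay. apply (Hall (k y) h Ay HF').
Qed.

Definition ev k h : Gam G TT := exist _ (evf k h) (ev_cont_hom k h).

Definition KC (K : set (Gam G (GammaCH H))) (C : set H) : set (Gam G TT) :=
  fun f => exists k h, K k /\ C h /\ f = ev k h.

Lemma fmap_ultra {X Y : Type} (f : X -> Y) (U : filt X) :
  is_ultrafilter U -> is_ultrafilter (fmap f U).
Proof.
  intros [[H1 [H2 [H3 H4]]] H5]. unfold fmap. split; [split; [|split; [|split]]|].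
  - exact H1.
  - exact H2.
  - intros A B HA HB. apply (H3 _ _ HA). intros x; apply HB.
  - intros A B HA HB. apply (H4 _ _ HA HB).
  - intro A. apply (H5 (fun x => A (f x))).
Qed.

Lemma KC_compact K C :
  Defs.compact (GammaS_conv G (GammaCH H)) K -> Defs.compact (cconv H) C ->
  Defs.compact (GammaS_conv G TT) (KC K C).
Proof.
  intros hK hC U HU HUK.
  assert (Ne : exists f0, KC K C f0).
  { destruct HU as [[_ [H2 [H3 _]]] _]. apply NNPP; intro N. apply H2.
    apply (H3 _ _ HUK). intros f Hf. apply N. eauto. }
  destruct Ne as [f0 [k0 [h0 _]]].
  assert (Sec : forall f, exists p : Gam G (GammaCH H) * H,
             KC K C f -> K (fst p) /\ C (snd p) /\ f = ev (fst p) (snd p)).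
  { intro f. destruct (classic (KC K C f)) as [[k [h [A [B E]]]]|N].
    - exists (k, h). intros _. simpl. auto.
    - exists (k0, h0). intro; contradiction. }
  destruct (choice _ Sec) as [s Hs].
  pose proof (fmap_ultra (fun f => fst (s f)) U HU) as HU1.
  pose proof (fmap_ultra (fun f => snd (s f)) U HU) as HU2.
  pose proof HU as [[_ [_ [Hup Hint]]] _].
  destruct (hK _ HU1) as [k1 [Hk1 Ck1]].
  { unfold fmap. apply (Hup _ _ HUK). intros f Hf. apply (Hs f Hf). }
  destruct (hC _ HU2) as [h1 [Hh1 Ch1]].
  { unfold fmap. apply (Hup _ _ HUK). intros f Hf. apply (Hs f Hf). }
  exists (ev k1 h1). split.
  { exists k1, h1. auto. }
  intros x eps Heps.
  pose proof (Ck1 x) as C1. simpl in C1. unfold GammaC_conv in C1.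
  destruct (C1 _ h1 (proj1 HU2) Ch1 eps Heps) as [A [F' [HA [HF' Hall]]]].
  unfold fmap in HA, HF' |- *.
  eapply Hup. apply (Hint _ _ HUK (Hint _ _ HA HF')).
  simpl. intros f [Hf [Af Ff]]. destruct (Hs f Hf) as [_ [_ E]].
  rewrite E. apply (Hall _ _ Af Ff).
Qed.
End Main.

Theorem theorem2p14 (G H : cgdata)
  (hG : is_cgroup G) (hGb : g_barrelled G)
  (hH : is_cgroup H) (hHlc : locally_compact (cconv H))
  (K : set (Gam G (GammaCH H)))
  (hK : compact (GammaS_conv G (GammaCH H)) K) :
  equicontinuous G (GammaCH H) K.
Proof.
  intros F HF HF0. simpl. intros Gf h HGf HGh eps Heps.
  destruct hHlc as [_ Hlc]. destruct (Hlc _ _ HGf HGh) as [C [HC Ccomp]].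
  pose proof (KC_compact G H hH K C hK Ccomp) as KCc.
  destruct (hGb _ KCc F HF HF0 eps Heps) as [F' [HF' Hall]].
  exists (fun psi => exists k x, K k /\ F' x /\ psi = proj1_sig k x), C.
  split; [|split; [exact HC|]].
  - exists F'. split; [exact HF'|]. intros psi y Kpsi Fy. eauto.
  - intros psi y [k [x [Kk [Fx E]]]] Cy. subst psi.
    apply (Hall (ev G H hH k y) x); [|exact Fx].
    exists k, y. auto.
Qed.
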